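(* For every integer $\ell\ge 2$, no witness of $D_{3\ell}(H_\ell)$ has size less than $|H_\ell|=6\ell-2$.
   Context: $\Lambda_i$ denotes the poset with $i$ minimal elements and one further element above all of them. $H_\ell$ is the poset whose connected components are $\ell$ copies of $\Lambda_2$ and one copy of $\Lambda_{3(\ell-1)}$. A downset is a downward-closed subset; $D_n(Q)$ is the set of downsets of $Q$ of size $n$ up to isomorphism. $Q$ is a witness of a set $\Gamma_n$ of unlabelled posets of size $n$ if $D_n(Q)=\Gamma_n$. *)

(* Defs.v *)
From mathcomp Require Import all_boot.
Set Implicit Arguments. Unset Strict Implicit. Unset Printing Implicit Defensive.

Definition is_poset (T : finType) (le : rel T) : Prop :=
  [/\ reflexive le, antisymmetric le & transitive le].

Definition downset (T : finType) (le : rel T) (A : {set T}) : Prop :=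
  forall x y, y \in A -> le x y -> x \in A.

Definition induced_iso (T U : finType) (leT : rel T) (leU : rel U)
    (A : {set T}) (B : {set U}) : Prop :=
  exists f : T -> U,
    [/\ {in A &, injective f}, f @: A = B &
        {in A &, forall x y, leU (f x) (f y) = leT x y}].

Definition Dn_incl (n : nat) (T U : finType) (leT : rel T) (leU : rel U) : Prop :=
  forall A : {set T}, downset leT A -> #|A| = n ->
    exists B : {set U}, [/\ downset leU B, #|B| = n & induced_iso leT leU A B].

(* D_n(T) = D_n(U) as sets of unlabelled posets. *)
Definition same_Dn (n : nat) (T U : finType) (leT : rel T) (leU : rel U) : Prop :=
  Dn_incl n leT leU /\ Dn_incl n leU leT.

Definition witness_of (n : nat) (Q P : finType) (leQ : rel Q) (leP : rel P) : Prop :=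
  same_Dn n leQ leP.

(* H_l : l copies of Lambda_2 (elements inl (k, i), k < l, i < 3; i = 2 is the
   top) and one copy of Lambda_{3(l-1)} (elements inr a, a < 3(l-1)+1;
   a = ord_max is the top). Size 3l + 3(l-1) + 1 = 6l - 2 for l >= 1. *)
Definition H_pt (l : nat) : finType :=
  ((('I_l * 'I_3)%type) + 'I_(3 * (l - 1)).+1)%type.

Definition H_le (l : nat) : rel (H_pt l) := fun x y =>
  match x, y with
  | inl (k, i), inl (k', i') => (k == k') && ((i == i') || (nat_of_ord i' == 2))
  | inr a, inr b => (a == b) || (b == ord_max)
  | _, _ => false
  end.
Arguments H_le l : clear implicits.

(* Main.v *)
Require Import Defs.
From mathcomp Require Import all_boot.
From mathcomp Require Import zify.
Set Implicit Arguments. Unset Strict Implicit. Unset Printing Implicit Defensive.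

Lemma H_two_up l (a b c : H_pt l) :
  H_le l a b -> H_le l a c -> a != b -> a != c -> b = c.
Proof.
case: a => [[k i]|a]; case: b => [[k1 i1]|b]; case: c => [[k2 i2]|c] //=.
- move=> /andP[/eqP <- /orP[/eqP <-|h1]] /andP[/eqP <- /orP[/eqP <-|h2]];
  rewrite ?eqxx //.
  move=> _ _. congr (inl (_, _)). apply: val_inj. by rewrite /= (eqP h1) (eqP h2).
- move=> /orP[/eqP <-|/eqP ->]; rewrite ?eqxx // => /orP[/eqP <-|/eqP ->]; by rewrite ?eqxx.
Qed.

Lemma card_sum_set (A B : finType) (P : pred (A + B)) :
  #|[set x | P x]| = #|[set a | P (inl a)]| + #|[set b | P (inr b)]|.
Proof.
have inlI : injective (@inl A B) by move=> x y [].
have inrI : injective (@inr A B) by move=> x y [].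
have -> : [set x | P x] = inl @: [set a | P (inl a)] :|: inr @: [set b | P (inr b)].
  apply/setP => -[a|b]; rewrite !inE ?(mem_imset _ _ inlI) ?(mem_imset _ _ inrI) !inE.
  - by rewrite orbC; case: imsetP => // -[].
  - by case: imsetP => // -[].
rewrite cardsU (card_imset _ inlI) (card_imset _ inrI).
suff -> : inl @: [set a | P (inl a)] :&: inr @: [set b | P (inr b)] = set0 by rewrite cards0 subn0.
apply/setP => x; rewrite !inE; apply/andP => -[/imsetP[? _ ->] /imsetP[? _]] //.
Qed.

Lemma below_inl_card l (k : 'I_l) (i : 'I_3) : #|[set b | H_le l b (inl (k, i))]| <= 3.
Proof.
apply: (leq_trans (subset_leq_card (B := [set (inl (k, j) : H_pt l) | j : 'I_3]) _)).
  apply/subsetP => -[[k' j]|b]; rewrite inE //= => /andP[/eqP -> _].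
  by apply/imsetP; exists j.
by apply: (leq_trans (leq_imset_card _ _)); rewrite card_ord.
Qed.

Lemma extend_downset (T : finType) (le : rel T) : is_poset le ->
  forall k n (D : {set T}), n - #|D| = k -> downset le D -> #|D| <= n -> n <= #|T| ->
  exists D', [/\ downset le D', D \subset D' & #|D'| = n].
Proof.
move=> [refl anti trans]; elim=> [|k IH] n D hk hD h1 h2.
  exists D; split => //; apply/eqP; rewrite eqn_leq h1 /=; lia.
have: exists y0, y0 \in ~: D.
  apply/set0Pn; rewrite -card_gt0.
  have := cardsC D; lia.
move=> [y0 Hy0].
case: (@arg_minnP _ y0 (mem (~: D)) (fun y => #|[set z | le z y]|) Hy0) => y Hy Hmin.
have hD' : downset le (y |: D).
  move=> z x; rewrite !inE => /orP[/eqP ->|xD] hzx; last by rewrite (hD _ _ xD hzx) orbT.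
  case: (boolP (z == y)) => //= zy.
  apply/negPn/negP => znD.
  have hle : #|[set w | le w y]| <= #|[set w | le w z]|.
    apply: (Hmin z); change (z \in ~: D); by rewrite inE.
  have : [set w | le w z] \proper [set w | le w y].
    apply/properP; split.
      by apply/subsetP => w; rewrite !inE => /trans; apply.
    exists y; rewrite !inE ?refl //.
    apply/negP => hyz; move/negP: zy; apply; apply/eqP/anti; by rewrite hzx hyz.
  move/proper_card; move: hle; lia.
have hyD : y \notin D.
  have Hy2 : y \in ~: D by []. by move: Hy2; rewrite inE.
have := IH n (y |: D); rewrite cardsU1 hyD.
case=> //; [lia|lia|] => D' [h3 h4 h5].
exists D'; split => //.
by apply: subset_trans h4; apply/subsetP => w wD; rewrite !inE wD orbT.
Qed.

Lemma card_setT' (T : finType) : #|[set a : T | true]| = #|T|.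
Proof. by apply: eq_card => x; rewrite inE. Qed.
Lemma card_setF' (T : finType) : #|[set a : T | false]| = 0.
Proof. by apply: eq_card0 => x; rewrite inE. Qed.

Theorem mainTheorem8 (l : nat) (hl : 2 <= l)
    (Q : finType) (leQ : rel Q) (hQ : is_poset leQ) :
  witness_of (3 * l) leQ (H_le l) -> 6 * l - 2 <= #|Q|.
Proof.
move=> [QH HQ].
have [reflQ antiQ transQ] := hQ.
pose AX : {set H_pt l} := [set x | if x is inl _ then true else false].
have AXd : downset (H_le l) AX.
  by move=> [[k i]|a] [[k' i']|b]; rewrite !inE.
have AXc : #|AX| = 3 * l.
  rewrite (card_sum_set (fun x : H_pt l => if x is inl _ then true else false)) /=.
  by rewrite card_setT' card_setF' card_prod !card_ord addn0 mulnC.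
have [X [Xd Xc [g [gI gX gle]]]] := HQ AX AXd AXc.
pose AY : {set H_pt l} := [set x : H_pt l | match x with
   inl (k, i) => (nat_of_ord k == 0) && (nat_of_ord i != 2) | inr _ => true end].
have AYd : downset (H_le l) AY.
  move=> [[k i]|a] [[k' i']|b]; rewrite !inE //= => /andP[hk hi]
    /andP[/eqP -> /orP[/eqP ->|h2]]; first by rewrite hk hi.
  by rewrite h2 in hi.
have AYc : #|AY| = 3 * l.
  rewrite (card_sum_set (fun x : H_pt l => match x with
   inl (k, i) => (nat_of_ord k == 0) && (nat_of_ord i != 2) | inr _ => true end)) /=.
  rewrite card_setT' card_ord.
  have l0 : 0 < l by apply: leq_trans hl.
  pose k0 : 'I_l := Ordinal l0.
  have -> : [set a : 'I_l * 'I_3 | let (k, i) := a in (nat_of_ord k == 0) && (nat_of_ord i != 2)]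
      = [set (k0, ord0); (k0, Ordinal (isT : 1 < 3))].
    apply/setP => -[k i]; rewrite !inE !xpair_eqE -!val_eqE /=.
    by case: (nat_of_ord k == 0); case: i => [[|[|[|i]]] hi].
  rewrite cards2 xpair_eqE eqxx /=.
  lia.
have [Y [Yd Yc [f [fI fY fle]]]] := HQ AY AYd AYc.
pose top : H_pt l := inr ord_max.
have topY : top \in AY by rewrite inE.
pose t := f top.
pose S := [set y | leQ y t].
pose AR : {set H_pt l} := [set x | if x is inr _ then true else false].
have ARsub : AR \subset AY by apply/subsetP => -[[k i]|a]; rewrite !inE.
have SE : S = f @: AR.
  apply/setP => y; rewrite inE; apply/idP/imsetP.
  - move=> hy.
    have tY : t \in Y by rewrite -fY; apply: imset_f.
    have := Yd _ _ tY hy; rewrite -fY => /imsetP[a aY ya].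
    exists a => //. rewrite ya /t fle // in hy.
    by move: hy; case: a {ya aY} => [[k i]|b]; rewrite !inE.
  - move=> [a aR ->]. rewrite /t fle //; last by apply: (subsetP ARsub).
    by case: a aR => [[k i]|b]; rewrite !inE //= eqxx orbT.
have Sc : #|S| = (3 * (l - 1)).+1.
  rewrite SE card_in_imset; last first.
    by move=> a b /(subsetP ARsub) ha /(subsetP ARsub) hb; apply: fI.
  rewrite (card_sum_set (fun x : H_pt l => if x is inr _ then true else false)) /=.
  by rewrite card_setT' card_setF' card_ord.
have Xbelow : forall k i, [set y | leQ y (g (inl (k, i)))] \subset
                          g @: [set b | H_le l b (inl (k, i))].
  move=> k i; apply/subsetP => y; rewrite inE => hy.
  have hAX : (inl (k, i) : H_pt l) \in AX by rewrite inE.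
  have hin : g (inl (k, i)) \in X by rewrite -gX imset_f.
  have := Xd _ _ hin hy; rewrite -gX => /imsetP[b bX yb].
  rewrite yb in hy *; apply: imset_f.
  by rewrite inE -(gle _ _ bX hAX).
have Xbc : forall k i, #|[set y | leQ y (g (inl (k, i)))]| <= 3.
  move=> k i; apply: leq_trans (subset_leq_card (Xbelow k i)) _.
  apply: leq_trans (leq_imset_card _ _) _; exact: below_inl_card.
have tX : t \notin X.
  apply/negP => tX; move: tX; rewrite -gX => /imsetP[a aX ta].
  move: aX; case: a ta => [[k i]|b] ta; rewrite inE // => _.
  have := Xbc k i; rewrite -ta -/S Sc; lia.
rewrite leqNgt; apply/negP => hQc.
have XS : X :&: S != set0.
  rewrite -card_gt0. have := cardsU X S. have : #|X :|: S| <= #|Q| by apply: max_card. lia.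
case/set0Pn: XS => m; rewrite inE => /andP[mX mS].
have := mX; rewrite -gX => /imsetP[a aX ma].
move: aX; case: a ma => [[k i]|b] ma; rewrite inE // => _.
pose xt : H_pt l := inl (k, ord_max).
pose x := g xt.
have xtX : xt \in AX by rewrite inE.
have xX : x \in X by rewrite -gX imset_f.
have [m' [m'X m'x m't m'nx]] : exists m', [/\ m' \in X, leQ m' x, leQ m' t & m' != x].
  case: (boolP (nat_of_ord i == 2)) => hi.
  - have bX : (inl (k, ord0) : H_pt l) \in AX by rewrite inE.
    exists (g (inl (k, ord0))); split.
    + by rewrite -gX imset_f.
    + by rewrite /x gle // /xt /= eqxx.
    + have mx : m = x.
        rewrite ma /x /xt; congr (g (inl (k, _))); apply/eqP; by rewrite -val_eqE.
      rewrite inE mx in mS; apply: transQ mS; by rewrite /x gle // /xt /= eqxx.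
    + apply/negP => /eqP /gI => /(_ bX xtX) /(congr1 (fun z : H_pt l => if z is inl (_, j) then nat_of_ord j else 0)).
      by [].
  - have iX : (inl (k, i) : H_pt l) \in AX by rewrite inE.
    exists m; split => //.
    + by rewrite ma /x gle //= eqxx orbT.
    + by move: mS; rewrite inE.
    + apply/negP => /eqP; rewrite ma /x => /gI => /(_ iX xtX) /(congr1 (fun z : H_pt l => if z is inl (_, j) then nat_of_ord j else 0)) /= h.
      by rewrite h in hi.
pose Sx := [set y | leQ y x].
have Sxc : #|Sx| <= 3 := Xbc k ord_max.
have D0d : downset leQ (S :|: Sx).
  move=> a b; rewrite !inE => /orP[hb|hb] hab.
    by rewrite (transQ _ _ _ hab hb).
  by rewrite (transQ _ _ _ hab hb) orbT.
have D0c : #|S :|: Sx| <= 3 * l.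
  have h := cardsUI S Sx.
  have : 0 < #|S :&: Sx| by apply/card_gt0P; exists m'; rewrite !inE m't m'x.
  move: Sxc Sc h; lia.
have hXQ : 3 * l <= #|Q| by rewrite -Xc max_card.
have [D [Dd DS Dc]] := extend_downset hQ (erefl (3 * l - #|S :|: Sx|)) D0d D0c hXQ.
have tD : t \in D by apply: (subsetP DS); rewrite !inE reflQ.
have xD : x \in D by apply: (subsetP DS); rewrite !inE reflQ orbT.
have m'D : m' \in D by apply: (subsetP DS); rewrite !inE m't.
have [B [Bd Bc [h [hI hB hle]]]] := QH D Dd Dc.
have m'nt : m' != t by apply/eqP => e; move: tX; rewrite -e m'X.
have := @H_two_up l (h m') (h x) (h t).
rewrite !hle // m'x m't => /(_ isT isT).
have n1 : h m' != h x by apply/eqP => /hI => /(_ m'D xD) e; rewrite e eqxx in m'nx.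
have n2 : h m' != h t by apply/eqP => /hI => /(_ m'D tD) e; rewrite e eqxx in m'nt.
move=> /(_ n1 n2) /hI => /(_ xD tD) e.
by move: tX; rewrite -e xX.
Qed.
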